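(* Let $\mathcal{F}$ be a $3$-uniform linear family and $\mathcal{M}$ a maximum matching of $\mathcal{F}$. Then for all distinct $A,B\in\mathcal{M}$, $|D_2(A,B)|\leq 8$.
   Context: A family is a finite collection of distinct subsets of a vertex set; $3$-uniform means every member has exactly $3$ elements and linear means any two distinct members share at most one vertex. A matching is a collection of pairwise disjoint members; a maximum matching is one of largest possible size. $X_{\mathcal{M}}=\bigcup_{A\in\mathcal{M}}A$, $D_2(\mathcal{F})=\{E\in\mathcal{F}:|E\cap X_{\mathcal{M}}|=2\}$, and for $A,B\in\mathcal{M}$, $D_2(A,B)=\{C\in D_2(\mathcal{F}): C\cap A\neq\emptyset,\ C\cap B\neq\emptyset\}$. *)

(* Defs.v *)
From mathcomp Require Import all_boot.
Set Implicit Arguments. Unset Strict Implicit. Unset Printing Implicit Defensive.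

Definition uniform3 (T : finType) (F : {set {set T}}) : Prop :=
  forall E, E \in F -> #|E| = 3.

Definition linear_family (T : finType) (F : {set {set T}}) : Prop :=
  forall E E', E \in F -> E' \in F -> E != E' -> #|E :&: E'| <= 1.

Definition matching (T : finType) (F M : {set {set T}}) : Prop :=
  M \subset F /\
  forall A B, A \in M -> B \in M -> A != B -> [disjoint A & B].

Definition maximum_matching (T : finType) (F M : {set {set T}}) : Prop :=
  matching F M /\ forall M', matching F M' -> #|M'| <= #|M|.

Definition XM (T : finType) (M : {set {set T}}) : {set T} := cover M.

Definition D2 (T : finType) (F M : {set {set T}}) : {set {set T}} :=
  [set E in F | #|E :&: XM M| == 2].

Definition D2AB (T : finType) (F M : {set {set T}}) (A B : {set T})
  : {set {set T}} :=
  [set C in D2 F M | (C :&: A != set0) && (C :&: B != set0)].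

(* Main.v *)
Require Import Defs.
From mathcomp Require Import all_boot.
Set Implicit Arguments. Unset Strict Implicit.

Lemma disjI (T : finType) (A B : {set T}) :
  (forall x, x \in A -> x \in B -> False) -> [disjoint A & B].
Proof.
move=> H; rewrite disjoint_subset; apply/subsetP => x xA; rewrite inE.
by apply/negP => /(H x xA).
Qed.

Lemma disjE (T : finType) (A B : {set T}) x :
  [disjoint A & B] -> x \in A -> x \in B -> False.
Proof. by move=> d xA; rewrite (disjointFr d xA). Qed.

Lemma cards3 (T : finType) (a b c : T) :
  a != b -> a != c -> b != c -> #|[set a; b; c]| = 3.
Proof.
move=> ab ac bc; rewrite -setUA cardsU1 cards2 bc !inE negb_or ab ac.
by [].
Qed.

Lemma card3P (T : finType) (A : {set T}) : #|A| = 3 ->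
  exists a0 a1 a2, [/\ a0 \in A, a1 \in A & a2 \in A] /\ [/\ a0 != a1, a0 != a2 & a1 != a2].
Proof.
rewrite cardE; have := enum_uniq (mem A); have mA := mem_enum (mem A).
case: (enum (mem A)) mA => [|x [|y [|z []]]] //= mA U _.
exists x, y, z; rewrite -!mA !inE !eqxx ?orbT; split=> //; move: U; rewrite !inE.
by rewrite negb_or => /and3P[/andP[-> ->] -> _].
Qed.

Definition goodv (T : finType) (F M : {set {set T}}) (a b v : T) :=
  ([set a; b; v] \in F) && (v \notin XM M).

Lemma share2 (T : finType) (F : {set {set T}}) (C C' : {set T}) p q :
  linear_family F -> C \in F -> C' \in F -> C != C' ->
  p \in C -> p \in C' -> q \in C -> q \in C' -> p != q -> False.
Proof.
move=> L CF C'F ne pC pC' qC qC' pq.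
have := L _ _ CF C'F ne.
have sub : [set p; q] \subset C :&: C'.
  by apply/subsetP => x; rewrite !inE => /orP[]/eqP->; rewrite ?pC ?pC' ?qC ?qC'.
have := subset_leq_card sub; rewrite cards2 pq.
move=> h1 h2; have := leq_trans h1 h2; by [].
Qed.

Lemma disj3 (T : finType) (X A B : {set T}) a b v a' b' v' :
  [disjoint A & B] -> A \subset X -> B \subset X ->
  a \in A -> a' \in A -> b \in B -> b' \in B -> v \notin X -> v' \notin X ->
  a != a' -> b != b' -> v != v' ->
  [disjoint [set a; b; v] & [set a'; b'; v']].
Proof.
move=> dAB AX BX aA a'A bB b'B vX v'X aa bb vv.
have nAB : forall x, x \in A -> x \in B -> False.
  by move=> x; apply: disjE.
have AXi : forall x, x \in A -> x \in X by move=> x; apply/subsetP.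
have BXi : forall x, x \in B -> x \in X by move=> x; apply/subsetP.
apply: disjI => x; rewrite !inE -!orbA => /or3P[]/eqP-> /or3P[]/eqP E.
- by rewrite E eqxx in aa.
- by apply: (nAB a); rewrite // E.
- by move: v'X; rewrite -E AXi.
- by apply: (nAB a'); rewrite // -E.
- by rewrite E eqxx in bb.
- by move: v'X; rewrite -E BXi.
- by move: vX; rewrite E AXi.
- by move: vX; rewrite E BXi.
- by rewrite E eqxx in vv.
Qed.
Lemma core (T : eqType) (s00 s01 s02 s10 s11 s12 s20 s21 s22 : T) :
  s00 <> s01 -> s00 <> s02 -> s01 <> s02 ->
  s10 <> s11 -> s10 <> s12 -> s11 <> s12 ->
  s20 <> s21 -> s20 <> s22 -> s21 <> s22 ->
  s00 <> s10 -> s00 <> s20 -> s10 <> s20 ->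
  s01 <> s11 -> s01 <> s21 -> s11 <> s21 ->
  s02 <> s12 -> s02 <> s22 -> s12 <> s22 ->
  [/\ s00 <> s11, s00 <> s22 & s11 <> s22] \/
      [/\ s00 <> s12, s00 <> s21 & s12 <> s21] \/
      [/\ s01 <> s10, s01 <> s22 & s10 <> s22] \/
      [/\ s01 <> s12, s01 <> s20 & s12 <> s20] \/
      [/\ s02 <> s10, s02 <> s21 & s10 <> s21] \/
      [/\ s02 <> s11, s02 <> s20 & s11 <> s20].
Proof.
move=> *.
have tri : forall x y z : T, [/\ x <> y, x <> z & y <> z] \/ (x = y \/ x = z \/ y = z).
  move=> x y z; case: (eqVneq x y) => [->|h1]; first by right; left.
  case: (eqVneq x z) => [->|h2]; first by right; right; left.
  case: (eqVneq y z) => [->|h3]; first by right; right; right.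
  by left; split; apply/eqP.
case: (tri s00 s11 s22) => [H|H1]; first by left.
case: (tri s00 s12 s21) => [H|H2]; first by right; left.
case: (tri s01 s10 s22) => [H|H3]; first by do 2 right; left.
case: (tri s01 s12 s20) => [H|H4]; first by do 3 right; left.
case: (tri s02 s10 s21) => [H|H5]; first by do 4 right; left.
case: (tri s02 s11 s20) => [H|H6]; first by do 5 right.
exfalso.
case: H1 => [|[|]] E1; case: H2 => [|[|]] E2; case: H3 => [|[|]] E3;
case: H4 => [|[|]] E4; case: H5 => [|[|]] E5; case: H6 => [|[|]] E6; congruence.
Qed.

Lemma aug (T : finType) (F M : {set {set T}}) (A B : {set T})
  (a1 a2 a3 b1 b2 b3 v1 v2 v3 : T) :
  matching F M -> A \in M -> B \in M -> A != B ->
  a1 \in A -> a2 \in A -> a3 \in A -> b1 \in B -> b2 \in B -> b3 \in B ->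
  goodv F M a1 b1 v1 -> goodv F M a2 b2 v2 -> goodv F M a3 b3 v3 ->
  a1 != a2 -> a1 != a3 -> a2 != a3 ->
  b1 != b2 -> b1 != b3 -> b2 != b3 ->
  v1 != v2 -> v1 != v3 -> v2 != v3 ->
  exists M', matching F M' /\ #|M| < #|M'|.
Proof.
move=> [MF Mdis] AM BM AB a1A a2A a3A b1B b2B b3B.
rewrite /goodv => /andP[C1F v1X] /andP[C2F v2X] /andP[C3F v3X] a12 a13 a23 b12 b13 b23 v12 v13 v23.
set X := XM M in v1X v2X v3X.
have EX : forall E, E \in M -> E \subset X.
  by move=> E EM; rewrite /X /XM /cover; apply: (bigcup_sup E).
have AX := EX A AM; have BX := EX B BM.
have dAB := Mdis A B AM BM AB.
have CnM : forall a b v, v \notin X -> [set a; b; v] \notin M.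
  move=> a b v vX; apply/negP => CM; move/subsetP: (EX _ CM) => /(_ v).
  by rewrite !inE eqxx orbT => /(_ isT); apply/negP.
have oldnew : forall E a b v, E \in M -> E != A -> E != B -> a \in A -> b \in B ->
    v \notin X -> [disjoint E & [set a; b; v]].
  move=> E a b v EM EA EB aA bB vX; apply: disjI => x xE.
  rewrite !inE -!orbA => /or3P[]/eqP xe; subst x.
  - by apply: (disjE (Mdis E A EM AM EA) xE).
  - by apply: (disjE (Mdis E B EM BM EB) xE).
  - by move: vX; rewrite (subsetP (EX E EM) v xE).
have d12 := disj3 dAB AX BX a1A a2A b1B b2B v1X v2X a12 b12 v12.
have d13 := disj3 dAB AX BX a1A a3A b1B b3B v1X v3X a13 b13 v13.
have d23 := disj3 dAB AX BX a2A a3A b2B b3B v2X v3X a23 b23 v23.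
have neq : forall (a b v : T) (C : {set T}), [disjoint [set a; b; v] & C] -> [set a; b; v] != C.
  move=> a b v C d; apply/negP => /eqP E; apply: (disjE d (x := a));
  by rewrite -?E !inE eqxx.
pose C1 := [set a1; b1; v1]; pose C2 := [set a2; b2; v2]; pose C3 := [set a3; b3; v3].
pose Old := M :\ A :\ B; pose New := [set C1; C2; C3].
exists (Old :|: New); split; first split.
- apply/subsetP => E; rewrite !inE -!orbA => /orP[/andP[_ /andP[_ EM]]|].
    exact: (subsetP MF).
  by case/or3P => /eqP->.
- move=> E E'; rewrite !inE -!orbA.
  case/orP => [/andP[EB /andP[EA EM]]|HE]; case/orP => [/andP[E'B /andP[E'A E'M]]|HE'] ne.
  + exact: Mdis.
  + by case/or3P: HE' => /eqP->; apply: oldnew.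
  + by rewrite disjoint_sym; case/or3P: HE => /eqP->; apply: oldnew.
  + case/or3P: HE => /eqP E1; case/or3P: HE' => /eqP E2; subst E E';
      rewrite ?eqxx // in ne; rewrite // disjoint_sym //.
- have cOld : #|Old| + 2 = #|M|.
    rewrite (cardsD1 A M) AM (cardsD1 B (M :\ A)) !inE eq_sym AB BM.
    by rewrite addnC -addn2.
  have cNew : #|New| = 3 by apply: cards3; apply: neq.
  have I0 : Old :&: New = set0.
    apply/setP => E; rewrite !inE -!orbA.
    apply/negP => /andP[/andP[_ /andP[_ EM]]] /or3P[]/eqP EE; move: EM; rewrite EE.
    + by apply/negP; apply: CnM.
    + by apply/negP; apply: CnM.
    + by apply/negP; apply: CnM.
  rewrite cardsU I0 cards0 subn0 cNew -cOld.
  by rewrite ltn_add2l.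
Qed.

Unset Implicit Arguments.
Set Strict Implicit.

Theorem proposition3 (T : finType) (F M : {set {set T}}) :
  uniform3 F -> linear_family F -> maximum_matching F M ->
  forall A B, A \in M -> B \in M -> A != B -> #|D2AB F M A B| <= 8.
Proof.
move=> U L [[MF Mdis] Mmax] A B AM BM AB.
set X := XM M.
have EX : forall E, E \in M -> E \subset X.
  by move=> E EM; rewrite /X /XM /cover; apply: (bigcup_sup E).
have AX := EX A AM; have BX := EX B BM.
have dAB := Mdis A B AM BM AB.
have cA : #|A| = 3 by apply: U; apply: (subsetP MF).
have cB : #|B| = 3 by apply: U; apply: (subsetP MF).
have [a0 [a1 [a2 [[a0A a1A a2A] [a01 a02 a12]]]]] := card3P cA.
have [b0 [b1 [b2 [[b0B b1B b2B] [b01 b02 b12]]]]] := card3P cB.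
rewrite leqNgt; apply/negP => big.
pose D := D2AB F M A B.
have DP : forall C, C \in D -> [/\ C \in F, #|C :&: X| = 2, C :&: A != set0 & C :&: B != set0].
  by move=> C; rewrite /D /D2AB /D2 !inE => /andP[/andP[-> /eqP ->] /andP[-> ->]].
pose h := fun C : {set T} => (odflt a0 [pick x in C :&: A], odflt b0 [pick x in C :&: B]).
have hP : forall C, C \in D -> [/\ (h C).1 \in C, (h C).1 \in A, (h C).2 \in C & (h C).2 \in B].
  move=> C /DP[_ _ nA nB]; rewrite /h /=.
  case: pickP => [x /setIP[xC xA]|none]; last by case/set0Pn: nA => x; rewrite none.
  case: pickP => [y /setIP[yC yB]|none]; last by case/set0Pn: nB => y; rewrite none.
  by [].
have hinj : {in D &, injective h}.
  move=> C C' CD C'D E; have [p1 p2 p3 p4] := hP C CD; have := hP C' C'D.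
  rewrite -E => -[q1 _ q3 _].
  apply/eqP; apply: contraT => ne.
  have [CF _ _ _] := DP C CD; have [C'F _ _ _] := DP C' C'D.
  case: (share2 L CF C'F ne p1 q1 p3 q3).
  by apply/negP => /eqP e; apply: (disjE dAB p2); rewrite e.
have himg : [set h C | C in D] = setX A B.
  apply/eqP; rewrite eqEcard; apply/andP; split.
    by apply/subsetP => p /imsetP[C CD ->]; rewrite inE; have [_ -> _ ->] := hP C CD.
  by rewrite cardsX cA cB card_in_imset.
have ex : forall a b, a \in A -> b \in B -> exists v, goodv F M a b v.
  move=> a b aA bB.
  have : (a, b) \in setX A B by rewrite inE /= aA bB.
  rewrite -himg => /imsetP[C CD [Ea Eb]].
  have [aC _ bC _] := hP C CD; move: aC bC; rewrite /h /= -Ea -Eb => aC bC.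
  have [CF cX _ _] := DP C CD.
  have : ~~ (C \subset X).
    apply/negP => sub; move: cX; rewrite (setIidPl sub) (U C CF); by [].
  case/subsetPn => v vC vX; exists v; rewrite /goodv vX andbT.
  have aX : a \in X by apply: (subsetP AX).
  have bX : b \in X by apply: (subsetP BX).
  have E : [set a; b; v] = C.
    apply/eqP; rewrite eqEcard; apply/andP; split.
      by apply/subsetP => x; rewrite !inE -!orbA => /or3P[]/eqP->.
    rewrite (U C CF) cards3 //.
    - by apply/negP => /eqP e; apply: (disjE dAB aA); rewrite e.
    - by apply: contraNneq vX => <-.
    - by apply: contraNneq vX => <-.
  by rewrite E.
have row : forall a b b' v v', a \in A -> b \in B -> b' \in B -> b != b' ->
    goodv F M a b v -> goodv F M a b' v' -> v <> v'.
  move=> a b b' v v' aA bB b'B bb /andP[CF vX] /andP[C'F v'X] vv; subst v'.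
  have aX : a \in X by apply: (subsetP AX).
  have b'X : b' \in X by apply: (subsetP BX).
  apply: (share2 L CF C'F _ (p := a) (q := v)); rewrite ?inE ?eqxx ?orbT //.
    apply/negP => /eqP E; move/setP: E => /(_ b'); rewrite !inE eqxx orbT /=.
    move/orP => [/orP[]|] /eqP e.
    + by apply: (disjE dAB aA); rewrite -e.
    + by rewrite e eqxx in bb.
    + by move: vX; rewrite -e b'X.
  by apply: contraNneq vX => <-.
have col : forall a a' b v v', a \in A -> a' \in A -> b \in B -> a != a' ->
    goodv F M a b v -> goodv F M a' b v' -> v <> v'.
  move=> a a' b v v' aA a'A bB aa /andP[CF vX] /andP[C'F v'X] vv; subst v'.
  have bX : b \in X by apply: (subsetP BX).
  have a'X : a' \in X by apply: (subsetP AX).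
  apply: (share2 L CF C'F _ (p := b) (q := v)); rewrite ?inE ?eqxx ?orbT //.
    apply/negP => /eqP E; move/setP: E => /(_ a'); rewrite !inE eqxx /=.
    move/orP => [/orP[]|] /eqP e.
    + by rewrite e eqxx in aa.
    + by apply: (disjE dAB a'A); rewrite e.
    + by move: vX; rewrite -e a'X.
  by apply: contraNneq vX => <-.
have [v00 g00] := ex a0 b0 a0A b0B. have [v01 g01] := ex a0 b1 a0A b1B.
have [v02 g02] := ex a0 b2 a0A b2B. have [v10 g10] := ex a1 b0 a1A b0B.
have [v11 g11] := ex a1 b1 a1A b1B. have [v12 g12] := ex a1 b2 a1A b2B.
have [v20 g20] := ex a2 b0 a2A b0B. have [v21 g21] := ex a2 b1 a2A b1B.
have [v22 g22] := ex a2 b2 a2A b2B.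
have contra : (exists M', matching F M' /\ #|M| < #|M'|) -> False.
  by case=> M' [m lt]; move: (Mmax M' m); rewrite leqNgt lt.
have mM : matching F M by split.
have := core
  (row _ _ _ _ _ a0A b0B b1B b01 g00 g01) (row _ _ _ _ _ a0A b0B b2B b02 g00 g02) (row _ _ _ _ _ a0A b1B b2B b12 g01 g02)
  (row _ _ _ _ _ a1A b0B b1B b01 g10 g11) (row _ _ _ _ _ a1A b0B b2B b02 g10 g12) (row _ _ _ _ _ a1A b1B b2B b12 g11 g12)
  (row _ _ _ _ _ a2A b0B b1B b01 g20 g21) (row _ _ _ _ _ a2A b0B b2B b02 g20 g22) (row _ _ _ _ _ a2A b1B b2B b12 g21 g22)
  (col _ _ _ _ _ a0A a1A b0B a01 g00 g10) (col _ _ _ _ _ a0A a2A b0B a02 g00 g20) (col _ _ _ _ _ a1A a2A b0B a12 g10 g20)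
  (col _ _ _ _ _ a0A a1A b1B a01 g01 g11) (col _ _ _ _ _ a0A a2A b1B a02 g01 g21) (col _ _ _ _ _ a1A a2A b1B a12 g11 g21)
  (col _ _ _ _ _ a0A a1A b2B a01 g02 g12) (col _ _ _ _ _ a0A a2A b2B a02 g02 g22) (col _ _ _ _ _ a1A a2A b2B a12 g12 g22).
case=> [|[|[|[|[|]]]]] [n1 n2 n3]; apply: contra.
- apply: (aug mM AM BM AB a0A a1A a2A b0B b1B b2B g00 g11 g22 a01 a02 a12); first [done | by rewrite eq_sym | by (apply/negP; move/eqP; assumption)].
- apply: (aug mM AM BM AB a0A a1A a2A b0B b2B b1B g00 g12 g21 a01 a02 a12); first [done | by rewrite eq_sym | by (apply/negP; move/eqP; assumption)].
- apply: (aug mM AM BM AB a0A a1A a2A b1B b0B b2B g01 g10 g22 a01 a02 a12); first [done | by rewrite eq_sym | by (apply/negP; move/eqP; assumption)].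
- apply: (aug mM AM BM AB a0A a1A a2A b1B b2B b0B g01 g12 g20 a01 a02 a12); first [done | by rewrite eq_sym | by (apply/negP; move/eqP; assumption)].
- apply: (aug mM AM BM AB a0A a1A a2A b2B b0B b1B g02 g10 g21 a01 a02 a12); first [done | by rewrite eq_sym | by (apply/negP; move/eqP; assumption)].
- apply: (aug mM AM BM AB a0A a1A a2A b2B b1B b0B g02 g11 g20 a01 a02 a12); first [done | by rewrite eq_sym | by (apply/negP; move/eqP; assumption)].
Qed.
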